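(* Let $G_1$ and $G_2$ be vertex-disjoint finite simple graphs and let $G=G_1*G_2$ be their join. If $G$ is not a complete multipartite graph, then (a) ${\rm v}(I_c(G))=\min\{{\rm v}(I_c(G_1))+|V(G_2)|,\ {\rm v}(I_c(G_2))+|V(G_1)|\}$, and (b) ${\rm v}(I_c(G))={\rm v}(I_c(G_1))+|V(G_2)|$ if $G_2$ is a discrete graph (has no edges).
   Context: The join $G_1*G_2$ consists of $G_1\cup G_2$ together with all edges joining a vertex of $G_1$ with a vertex of $G_2$. A graph is complete multipartite if it is a join $H_1*\cdots*H_k$, $k\ge2$, of pairwise vertex-disjoint graphs without edges. For a graph $H$ with vertex set $\{t_1,\ldots,t_n\}$, $I_c(H)$ is the ideal of $K[t_1,\ldots,t_n]$ ($K$ a field) generated by $\prod_{t_i\in C}t_i$ over all minimal vertex covers $C$ of $H$ (vertex cover: subset of vertices meeting every edge). For a graded ideal $I$ of a standard graded polynomial ring $R$, ${\rm v}(I)=\min\{d\ge0:\exists f\in R_d,\ \exists\mathfrak p\in{\rm Ass}(I),\ (I\colon f)=\mathfrak p\}$. *)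

(* Defs.v *)
From HB Require Import structures.
From mathcomp Require Import all_boot all_order all_algebra.
From mathcomp Require Import mpoly.

Set Implicit Arguments.
Unset Strict Implicit.
Unset Printing Implicit Defensive.

Import GRing.Theory.
Local Open Scope ring_scope.

Definition simple_graph (T : finType) (e : rel T) : Prop :=
  ssrbool.symmetric e /\ ssrbool.irreflexive e.

Definition discrete_graph (T : finType) (e : rel T) : Prop :=
  forall x y, e x y = false.

Definition graph_join (T1 T2 : finType) (e1 : rel T1) (e2 : rel T2)
  : rel (T1 + T2)%type :=
  fun u v => match u, v with
             | inl x, inl y => e1 x y
             | inr x, inr y => e2 x y
             | _, _ => true
             end.

(* Complete multipartite graph: a join H_1 * ... * H_k (k >= 2) of pairwise
   vertex-disjoint edgeless (nonempty) graphs, i.e. a partition of the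
   vertices into k >= 2 nonempty classes, with x ~ y iff x, y lie in
   different classes. *)
Definition complete_multipartite (T : finType) (e : rel T) : Prop :=
  exists (k : nat) (c : T -> 'I_k),
    (2 <= k)%N /\ (forall i : 'I_k, exists x, c x = i) /\
    (forall x y, e x y = (c x != c y)).

Definition vertex_cover (T : finType) (e : rel T) : pred {set T} :=
  fun C => [forall x, forall y, e x y ==> (x \in C) || (y \in C)].

Definition min_vertex_cover (T : finType) (e : rel T) (C : {set T}) : bool :=
  minset (vertex_cover e) C.

Definition polyring (K : fieldType) (T : finType) := {mpoly K[#|T|]}.

Definition tvar (K : fieldType) (T : finType) (v : T) : polyring K T :=
  'X_(enum_rank v).

(* Ideals are represented by their membership predicates. *)
Definition colon_ideal (R : ringType) (I : R -> Prop) (f : R) : R -> Prop :=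
  fun g => I (g * f).

Definition is_ideal (R : ringType) (P : R -> Prop) : Prop :=
  P 0 /\ (forall a b, P a -> P b -> P (a + b)) /\
  (forall r a, P a -> P (r * a)).

Definition prime_ideal (R : ringType) (P : R -> Prop) : Prop :=
  is_ideal P /\ ~ P 1 /\ (forall a b, P (a * b) -> P a \/ P b).

Definition same_ideal (R : ringType) (P Q : R -> Prop) : Prop :=
  forall g, P g <-> Q g.

Definition Ass (R : ringType) (I : R -> Prop) (p : R -> Prop) : Prop :=
  prime_ideal p /\ exists g, same_ideal p (colon_ideal I g).

(* Homogeneous of (standard) degree d, i.e. element of R_d (0 included). *)
Definition homog_of_deg (K : fieldType) (n : nat) (d : nat) (f : {mpoly K[n]}) :=
  f \is ishomog1 d mdeg.

Definition vnum_witness (K : fieldType) (n : nat) (I : {mpoly K[n]} -> Prop)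
    (d : nat) : Prop :=
  exists f : {mpoly K[n]}, homog_of_deg d f /\
    exists p, Ass I p /\ same_ideal (colon_ideal I f) p.

(* is_vnum I v : v(I) = v, where v = None means the defining set is empty
   (v(I) = +infinity, e.g. when I is the unit ideal). *)
Definition is_vnum (K : fieldType) (n : nat) (I : {mpoly K[n]} -> Prop)
    (v : option nat) : Prop :=
  match v with
  | Some d => vnum_witness I d /\ (forall d', vnum_witness I d' -> (d <= d')%N)
  | None => forall d, ~ vnum_witness I d
  end.

Definition cover_monomial (K : fieldType) (T : finType) (C : {set T})
    : polyring K T :=
  \prod_(v in C) tvar K v.

Definition cover_ideal (K : fieldType) (T : finType) (e : rel T)
    : polyring K T -> Prop :=
  fun f => exists c : {set T} -> polyring K T,
    f = \sum_(C : {set T} | min_vertex_cover e C) c C * cover_monomial K C.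

(* Arithmetic on extended naturals (None = +infinity). *)
Definition oaddn (v : option nat) (m : nat) : option nat :=
  omap (fun d => (d + m)%N) v.

Definition ominn (v w : option nat) : option nat :=
  match v, w with
  | Some a, Some b => Some (minn a b)
  | Some a, None => Some a
  | None, Some b => Some b
  | None, None => None
  end.

Arguments tvar K {T} v.
Arguments cover_monomial K {T} C.
Arguments cover_ideal K {T} e _.

(* Main.v *)
Require Import Defs.
From HB Require Import structures.
From mathcomp Require Import all_boot all_order all_algebra.
From mathcomp Require Import mpoly.
From mathcomp Require Import zify.
Set Implicit Arguments.
Unset Strict Implicit.
Unset Printing Implicit Defensive.
Import GRing.Theory.

Section Alg.
Variables (K : fieldType) (T : finType) (e : rel T).
Local Open Scope ring_scope.
Local Notation n := #|T|.
Local Notation P := {mpoly K[#|T|]}.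
Local Notation I := (@cover_ideal K T e).

Definition supp (m : 'X_{1..n}) : {set T} := [set v | (0 < m (enum_rank v))%N].

Definition muC (C : {set T}) : 'X_{1..n} := (\sum_(v in C) U_(enum_rank v))%MM.

Lemma muCE C v : muC C (enum_rank v) = (v \in C).
Proof.
rewrite /muC mnm_sumE.
case: (boolP (v \in C)) => vC.
  rewrite (bigD1 v) //= mnm1E eqxx big1 // => w /andP [_ wv].
  by rewrite mnm1E (inj_eq enum_rank_inj) (negbTE wv).
rewrite big1 // => w wC; rewrite mnm1E (inj_eq enum_rank_inj).
by apply/eqP; rewrite eqb0; apply: contra vC => /eqP <-.
Qed.

Lemma supp_muC C : supp (muC C) = C.
Proof. by apply/setP => v; rewrite inE muCE; case: (v \in C). Qed.

Lemma suppD m1 m2 : supp (m1 + m2)%MM = supp m1 :|: supp m2.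
Proof. by apply/setP => v; rewrite !inE mnmDE addn_gt0. Qed.

Lemma coverM C : cover_monomial K C = 'X_[muC C] :> P.
Proof.
rewrite /cover_monomial /tvar /muC.
by rewrite (big_morph (fun m => 'X_[m] : P) (@mpolyXD _ _) (@mpolyX0 _ _)).
Qed.

Lemma mdeg_muC C : mdeg (muC C) = #|C|.
Proof.
rewrite /muC mdeg_sum (eq_bigr (fun _ => 1%N)) ?sum1_card // => v _; exact: mdeg1.
Qed.

Lemma card_supp_le m : (#|supp m| <= mdeg m)%N.
Proof.
rewrite mdegE -sum1_card (reindex (@enum_rank T)) /=; last first.
  by apply: onW_bij; exact: enum_rank_bij.
rewrite big_mkcond /= leq_sum // => v _.
by rewrite inE; case: (m (enum_rank v)).
Qed.

Lemma I0 : I 0.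
Proof. by exists (fun _ => 0); rewrite big1 // => C _; rewrite mul0r. Qed.

Lemma ID a b : I a -> I b -> I (a + b).
Proof.
move=> [c1 ->] [c2 ->]; exists (fun C => c1 C + c2 C).
by rewrite -big_split; apply: eq_bigr => C _; rewrite mulrDl.
Qed.

Lemma IM r a : I a -> I (r * a).
Proof.
move=> [c ->]; exists (fun C => r * c C).
by rewrite mulr_sumr; apply: eq_bigr => C _; rewrite mulrA.
Qed.

Lemma Igen C : min_vertex_cover e C -> I (cover_monomial K C).
Proof.
move=> mC; exists (fun C' => if C' == C then 1 else 0).
rewrite (bigD1 C) //= eqxx mul1r big1 ?addr0 // => C' /andP [_ /negbTE ->].
by rewrite mul0r.
Qed.

Lemma vc_mono (A B : {set T}) : A \subset B -> vertex_cover e A -> vertex_cover e B.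
Proof.
move=> AB /forallP H; apply/forallP => x; apply/forallP => y; apply/implyP => exy.
have := implyP (forallP (H x) y) exy; case/orP => h; apply/orP; [left|right];
  exact: (subsetP AB).
Qed.

Lemma exists_minvc (A : {set T}) : vertex_cover e A ->
  exists C, min_vertex_cover e C /\ C \subset A.
Proof.
move=> vA.
pose Q := fun B : {set T} => vertex_cover e B && (B \subset A).
have PA : Q A by rewrite /Q vA subxx.
case: (@arg_minnP _ A Q (fun B : {set T} => #|B|) PA) => C /andP [vC CA] Hmin.
exists C; split => //; apply/minsetP; split => // B vB BC.
apply/eqP; rewrite eqEcard BC /=; apply: Hmin.
by rewrite /Q (subset_trans BC CA) andbT.
Qed.

Lemma msuppMX_mem (p : P) mu m :
  (m \in msupp (p * 'X_[mu])) = (m \in [seq (mu + m')%MM | m' <- msupp p]).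
Proof. exact: (perm_mem (msuppMX p mu) m). Qed.

Lemma CI f : I f <-> all (fun m => vertex_cover e (supp m)) (msupp f).
Proof.
split.
  move=> [c ->].
  apply: (big_ind (fun g : P => all (fun m => vertex_cover e (supp m)) (msupp g))).
  - by rewrite msupp0.
  - move=> g h /allP Hg /allP Hh; apply/allP => m /msuppD_le.
    by rewrite mem_cat => /orP [/Hg|/Hh].
  - move=> C mC; apply/allP => m; rewrite coverM msuppMX_mem => /mapP [m' _ ->].
    rewrite suppD supp_muC; apply: vc_mono (subsetUl _ _) (minsetp mC).
move=> /allP H; rewrite (mpolyE f) big_seq.
apply: big_ind; [exact: I0 | exact: ID |] => m mf.
have [C [mC CS]] := exists_minvc (H m mf).
have le : (muC C <= m)%MM.
  apply/mnm_lepP => i; rewrite -(enum_valK i) muCE.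
  case: (boolP (enum_val i \in C)) => // /(subsetP CS); by rewrite inE.
have -> : 'X_[m] = 'X_[(m - muC C)%MM] * 'X_[muC C] :> P by rewrite -mpolyXD submK.
rewrite -mul_mpolyC mulrA -coverM; apply: IM; exact: Igen.
Qed.

Lemma CM (g : P) mu : I (g * 'X_[mu]) <->
  all (fun m => vertex_cover e (supp mu :|: supp m)) (msupp g).
Proof.
rewrite CI; split => /allP H; apply/allP.
  move=> m mg; rewrite -suppD; apply: H; rewrite msuppMX_mem; exact: map_f.
move=> m; rewrite msuppMX_mem => /mapP [m' m'g ->]; rewrite suppD; exact: H.
Qed.


Lemma vcP (A : {set T}) x y : vertex_cover e A -> e x y -> (x \in A) || (y \in A).
Proof. by move=> /forallP H exy; have := implyP (forallP (H x) y) exy. Qed.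

Lemma vcI (A : {set T}) : (forall x y, e x y -> (x \in A) || (y \in A)) -> vertex_cover e A.
Proof. by move=> H; apply/forallP => x; apply/forallP => y; apply/implyP; apply: H. Qed.

Definition good (A : {set T}) : Prop := exists x y, e x y /\ x \notin A /\ y \notin A /\
  forall x' y', e x' y' -> x' \notin A -> y' \notin A ->
    (x' = x /\ y' = y) \/ (x' = y /\ y' = x).

Lemma prime_prod (Q : P -> Prop) (J : eqType) (r : seq J) (B : pred J) (F : J -> P) :
  ~ Q 1 -> (forall a b, Q (a * b) -> Q a \/ Q b) ->
  Q (\prod_(i <- r | B i) F i) -> exists i, B i /\ Q (F i).
Proof.
move=> n1 pr; elim: r => [|i r IH]; first by rewrite big_nil.
rewrite big_cons; case: (boolP (B i)) => Bi; last exact: IH.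
by case/pr => [h|/IH //]; exists i.
Qed.

Lemma supp_sumU (J : finType) (B : pred J) (F : J -> T) j : B j ->
  F j \in supp (\sum_(i | B i) U_(enum_rank (F i)))%MM.
Proof.
move=> Bj; rewrite inE mnm_sumE (bigD1 j) //= mnm1E eqxx.
by rewrite addn_gt0.
Qed.

Lemma supp_U v : supp U_(enum_rank v) = [set v].
Proof.
by apply/setP => w; rewrite !inE mnm1E (inj_eq enum_rank_inj) eq_sym; case: (w == v).
Qed.

Lemma W_lb d : simple_graph e -> vnum_witness I d -> exists A, good A /\ (#|A| <= d)%N.
Proof.
move=> [esym eirr] [f [hf [p [[[_ [n1 pr]] _] fp]]]].
pose Qc (g : P) := I (g * f).
have Qn1 : ~ Qc 1 by move/fp/n1.
have Qpr : forall a b, Qc (a * b) -> Qc a \/ Qc b.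
  by move=> a b /fp /pr [] /fp; [left|right].
pose bad (xy : T * T) := e xy.1 xy.2 &&
  has (fun m => (xy.1 \notin supp m) && (xy.2 \notin supp m)) (msupp f).
pose Cs := [set z | [forall xy, bad xy ==> (z == xy.1) || (z == xy.2)]].
pose w (xy : T * T) := if xy.1 \in Cs then xy.2 else xy.1.
pose mu := (\sum_(xy | bad xy) U_(enum_rank (w xy)))%MM.
have Qg : Qc (\prod_(xy | bad xy) 'X_(enum_rank (w xy))).
  rewrite /Qc -(big_morph (fun m => 'X_[m] : P) (@mpolyXD _ _) (@mpolyX0 _ _)).
  rewrite mulrC; apply/CM; apply/allP => m mf; apply: vcI => x y exy.
  case: (boolP (bad (x, y))) => bxy.
    have := supp_sumU (fun xy => w xy) bxy; rewrite -/mu => wmu.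
    move: wmu; rewrite /w /=; case: (x \in Cs) => /= wmu; rewrite !in_setU wmu ?orbT //.
  move: bxy; rewrite /bad /= exy /= => /hasPn /(_ m mf).
  by rewrite negb_and !negbK => /orP [] h; rewrite !in_setU h ?orbT.
have [[x0 y0] [b0 Q0]] := prime_prod Qn1 Qpr Qg.
set w0 := w (x0, y0) in Q0.
move: Q0; rewrite /Qc mulrC => /CM; rewrite supp_U => /allP Hw.
have w0C : w0 \in Cs.
  rewrite inE; apply/forallP => xy; apply/implyP => /andP [exy /hasP [m mf /andP [h1 h2]]].
  have := vcP (Hw m mf) exy; rewrite !in_setU !in_set1 (negbTE h1) (negbTE h2) !orbF.
  by case/orP => /eqP ->; rewrite eqxx ?orbT.
have x0C : x0 \in Cs.
  move: w0C; rewrite /w0 /w /=; case: (boolP (x0 \in Cs)) => h1 h2 //; by rewrite h2 in h1.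
have y0C : y0 \in Cs by move: w0C; rewrite /w0 /w /= x0C.
move: (b0); rewrite /bad /= => /andP [e0 /hasP [m0 m0f /andP [nx0 ny0]]].
exists (supp m0); split; last first.
  have := allP hf m0 m0f; rewrite /= => /eqP <-; exact: card_supp_le.
exists x0, y0; split => //; split => //; split => // x' y' exy nx ny.
have bxy : bad (x', y') by rewrite /bad /= exy; apply/hasP; exists m0 => //; rewrite nx ny.
rewrite inE in x0C; rewrite inE in y0C.
have hx := implyP (forallP x0C (x', y')) bxy.
have hy := implyP (forallP y0C (x', y')) bxy.
have nxy : x0 != y0 by apply: contraTneq e0 => ->; rewrite eirr.
have nxy' : x' != y' by apply: contraTneq exy => ->; rewrite eirr.
move: hx hy nxy nxy'; rewrite /=.
case/orP => /eqP -> ; case/orP => /eqP ->; rewrite ?eqxx //; auto.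
Qed.


Section Phi.
Variables (x y : T).
Definition hxy (i : 'I_n) : P := if (enum_val i == x) || (enum_val i == y) then 0 else 'X_i.
Definition phi (p : P) : P := mmap (@mpolyC n K) hxy p.

Lemma mmap1_h m : mmap1 hxy m = if (x \notin supp m) && (y \notin supp m) then 'X_[m] else 0.
Proof.
rewrite /mmap1; case: ifP => [/andP [nx ny]|].
  rewrite mpolyXE_id; rewrite (eq_bigr (fun i => (GRing.exp ('X_i : P) (m i)))) // => i _; rewrite /hxy.
  case: ifP => // /orP [] /eqP ei.
    by move: nx; rewrite inE -ei enum_valK lt0n negbK => /eqP ->; rewrite !expr0.
  by move: ny; rewrite inE -ei enum_valK lt0n negbK => /eqP ->; rewrite !expr0.
move/negbT; rewrite negb_and !negbK => /orP [] h.
  rewrite (bigD1 (enum_rank x)) //= /hxy enum_rankK eqxx /= expr0n.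
  by move: h; rewrite inE => /lt0n_neq0 /negbTE ->; rewrite mul0r.
rewrite (bigD1 (enum_rank y)) //= /hxy enum_rankK eqxx orbT /= expr0n.
by move: h; rewrite inE => /lt0n_neq0 /negbTE ->; rewrite mul0r.
Qed.

Lemma phiE p : phi p =
  \sum_(m <- [seq m <- msupp p | (x \notin supp m) && (y \notin supp m)]) p@_m *: 'X_[m].
Proof.
rewrite /phi /mmap big_filter; elim: (msupp p) => [|m r IH]; first by rewrite !big_nil.
rewrite !big_cons IH mmap1_h; case: ifP => _; by rewrite ?mulr0 ?add0r // mul_mpolyC.
Qed.

Lemma phi0 p : phi p = 0 <-> all (fun m => (x \in supp m) || (y \in supp m)) (msupp p).
Proof.
rewrite phiE; split.
  move=> H; set r := [seq _ <- _ | _] in H.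
  have hp : perm_eq (msupp (\sum_(m <- r) p@_m *: 'X_[m] : P)) r.
    apply: msupp_sumX; first by rewrite filter_uniq // msupp_uniq.
    by move=> m; rewrite mem_filter => /andP [_]; rewrite mcoeff_msupp.
  rewrite H msupp0 in hp.
  have r0 : r = [::] by apply/perm_nilP; rewrite perm_sym.
  apply/allP => m mp; apply/negPn/negP => hm.
  have : m \in r by rewrite mem_filter mp -negb_or hm.
  by rewrite r0.
move=> /allP H; rewrite big1_seq // => m /andP [_]; rewrite mem_filter => /andP [/andP [nx ny] mp].
by move: (H m mp); rewrite (negbTE nx) (negbTE ny).
Qed.

Lemma phiM a b : phi (a * b) = phi a * phi b.
Proof. exact: rmorphM. Qed.
End Phi.

Lemma W_ub A : simple_graph e -> good A -> vnum_witness I #|A|.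
Proof.
move=> [esym eirr] [x [y [exy [nx [ny Hu]]]]].
pose f := cover_monomial K A.
have key : forall g, colon_ideal I f g <-> phi x y g = 0.
  move=> g; rewrite /colon_ideal /f coverM CM supp_muC phi0.
  split => /allP H; apply/allP => m mg.
    have := vcP (H m mg) exy; rewrite !in_setU (negbTE nx) (negbTE ny) /=; by [].
  apply: vcI => x' y' e'.
  case: (boolP (x' \in A)) => [h|nx']; first by rewrite !in_setU h.
  case: (boolP (y' \in A)) => [h|ny']; first by rewrite !in_setU h !orbT.
  have := H m mg; rewrite !in_setU (negbTE nx') (negbTE ny') /=.
  by case: (Hu x' y' e' nx' ny') => [[-> ->]|[-> ->]] // ; rewrite orbC.
exists f; split.
  rewrite /homog_of_deg /f coverM qualifE /= msuppX /= mdeg_muC eqxx //.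
exists (colon_ideal I f); split; last by [].
split; last by exists f.
split.
  split; first by rewrite /colon_ideal mul0r; exact: I0.
  split; first by move=> a b ha hb; rewrite /colon_ideal mulrDl; exact: ID.
  by move=> r a ha; rewrite /colon_ideal -mulrA; exact: IM.
split.
  move/key/phi0; rewrite msupp1 /= andbT !inE !mnm0E //.
move=> a b /key; rewrite phiM => /eqP; rewrite mulf_eq0 => /orP [] /eqP /key; auto.
Qed.

End Alg.
Section Join.
Variables (T1 T2 : finType) (e1 : rel T1) (e2 : rel T2).
Local Notation G := (graph_join e1 e2).

Lemma card_sum (A : {set (T1 + T2)%type}) :
  #|A| = (#|[set x | inl x \in A]| + #|[set y | inr y \in A]|)%N.
Proof.
rewrite -sum1_card big_sumType -!sum1_card; congr addn; apply: eq_bigl => z; by rewrite inE.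
Qed.

Lemma L1 A1 : good e1 A1 ->
  good G [set z : (T1 + T2)%type | match z with inl x => x \in A1 | inr _ => true end] /\
  #|[set z : (T1 + T2)%type | match z with inl x => x \in A1 | inr _ => true end]| = (#|A1| + #|T2|)%N.
Proof.
move=> [x [y [exy [nx [ny Hu]]]]]; split.
  exists (inl x), (inl y); rewrite !inE; split => //; split => //; split => //.
  move=> [x'|x'] [y'|y'] //=; rewrite !inE // => e' nx' ny'.
  by case: (Hu x' y' e' nx' ny') => [[-> ->]|[-> ->]]; auto.
rewrite card_sum; congr addn.
  by apply: eq_card => z; rewrite !inE.
by rewrite -cardsT; apply: eq_card => z; rewrite !inE.
Qed.

Lemma L2 A2 : good e2 A2 ->
  good G [set z : (T1 + T2)%type | match z with inl _ => true | inr y => y \in A2 end] /\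
  #|[set z : (T1 + T2)%type | match z with inl _ => true | inr y => y \in A2 end]| = (#|A2| + #|T1|)%N.
Proof.
move=> [x [y [exy [nx [ny Hu]]]]]; split.
  exists (inr x), (inr y); rewrite !inE; split => //; split => //; split => //.
  move=> [x'|x'] [y'|y'] //=; rewrite !inE // => e' nx' ny'.
  by case: (Hu x' y' e' nx' ny') => [[-> ->]|[-> ->]]; auto.
rewrite card_sum addnC; congr addn.
  by apply: eq_card => z; rewrite !inE.
by rewrite -cardsT; apply: eq_card => z; rewrite !inE.
Qed.

Lemma card_pair (T : finType) (r : rel T) x y : irreflexive r -> r x y ->
  (#|~: [set x; y]| + 2 = #|T|)%N.
Proof.
move=> irr rxy; have nxy : x != y by apply: contraTneq rxy => ->; rewrite irr.
by rewrite -(cardsC [set x; y]) cards2 nxy addnC.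
Qed.

Lemma good_pair (T : finType) (r : rel T) x y : irreflexive r -> r x y ->
  good r (~: [set x; y]).
Proof.
move=> irr rxy; exists x, y; rewrite !inE !eqxx ?orbT; split => //; split => //; split => //.
move=> x' y' r' ; rewrite !inE !negbK => /orP [] /eqP ex /orP [] /eqP ey; subst; auto;
  by rewrite irr in r'.
Qed.

Lemma L3 A : simple_graph e1 -> simple_graph e2 -> ~ complete_multipartite G ->
  good G A ->
  (exists A1, good e1 A1 /\ (#|A1| + #|T2| <= #|A|)%N) \/
  (exists A2, good e2 A2 /\ (#|A2| + #|T1| <= #|A|)%N).
Proof.
move=> [_ irr1] [_ irr2] ncm [a [b [eab [na [nb Hu]]]]].
have cA := card_sum A.
case: (boolP [forall y, inr y \in A]) => [/forallP allr|].
  left; exists [set x | inl x \in A]; split; last first.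
    rewrite cA leq_add2l -cardsT subset_leq_card //; apply/subsetP => y _; rewrite inE; exact: allr.
  case: a b eab na nb Hu => [a|a] [b|b] //= eab na nb Hu; last by rewrite allr in na.
    exists a, b; rewrite !inE; split => //; split => //; split => // x' y' e'; rewrite !inE => nx' ny'.
    by case: (Hu (inl x') (inl y') e' nx' ny') => [[[->] [->]]|[[->] [->]]]; auto.
  by rewrite allr in nb.
  by rewrite allr in na.
move/forallPn => [y2 ny2].
case: (boolP [forall x, inl x \in A]) => [/forallP alll|].
  right; exists [set y | inr y \in A]; split; last first.
    rewrite cA addnC leq_add2r -cardsT subset_leq_card //; apply/subsetP => y _; rewrite inE; exact: alll.
  case: a b eab na nb Hu => [a|a] [b|b] //= eab na nb Hu.
  - by rewrite alll in na.
  - by rewrite alll in na.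
  - by rewrite alll in nb.
  exists a, b; rewrite !inE; split => //; split => //; split => // x' y' e'; rewrite !inE => nx' ny'.
  by case: (Hu (inr x') (inr y') e' nx' ny') => [[[->] [->]]|[[->] [->]]]; auto.
move/forallPn => [x1 nx1].
have H1 : forall z, z != x1 -> inl z \in A.
  move=> z; apply: contraR => nz; apply/eqP.
  case: (Hu (inl z) (inr y2) isT nz ny2) => [[h1 h2]|[h1 h2]];
  case: (Hu (inl x1) (inr y2) isT nx1 ny2) => [[h3 h4]|[h3 h4]]; congruence.
have H2 : forall z, z != y2 -> inr z \in A.
  move=> z; apply: contraR => nz; apply/eqP.
  case: (Hu (inl x1) (inr z) isT nx1 nz) => [[h1 h2]|[h1 h2]];
  case: (Hu (inl x1) (inr y2) isT nx1 ny2) => [[h3 h4]|[h3 h4]]; congruence.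
have c1 : (#|T1| <= #|[set x | inl x \in A]| + 1)%N.
  have : [set~ x1] \subset [set x | inl x \in A].
    by apply/subsetP => z; rewrite !inE => /H1.
  move/subset_leq_card; have := cardsC [set x1]; rewrite cards1; lia.
have c2 : (#|T2| <= #|[set y | inr y \in A]| + 1)%N.
  have : [set~ y2] \subset [set y | inr y \in A].
    by apply/subsetP => z; rewrite !inE => /H2.
  move/subset_leq_card; have := cardsC [set y2]; rewrite cards1; lia.
case: (boolP [exists x, exists y, e1 x y]) => [/existsP [x /existsP [y exy]]|n1].
  left; exists (~: [set x; y]); split; first exact: good_pair.
  have := card_pair irr1 exy; move: c1 c2 cA; set n1 := #|T1|; set n2 := #|T2|; set a1 := #|[set x | inl x \in A]|; set a2 := #|[set y | inr y \in A]|; set c := #|~: [set x; y]|; set nA := #|A|; lia.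
case: (boolP [exists x, exists y, e2 x y]) => [/existsP [x /existsP [y exy]]|n2].
  right; exists (~: [set x; y]); split; first exact: good_pair.
  have := card_pair irr2 exy; move: c1 c2 cA; set m1 := #|T1|; set m2 := #|T2|; set a1 := #|[set x | inl x \in A]|; set a2 := #|[set y | inr y \in A]|; set c := #|~: [set x; y]|; set nA := #|A|; lia.
exfalso; apply: ncm.
exists 2, (fun z => match z with inl _ => ord0 | inr _ => ord_max end); split => //; split.
  move=> i; case: i => [[|[|//]]] Hi.
    by exists (inl x1); apply: val_inj.
  by exists (inr y2); apply: val_inj.
move=> [x|x] [y|y] //=.
  by apply/negbTE; apply: contra n1 => h; apply/existsP; exists x; apply/existsP; exists y.
by apply/negbTE; apply: contra n2 => h; apply/existsP; exists x; apply/existsP; exists y.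
Qed.

End Join.
Definition cv (T : finType) (e : rel T) (v : option nat) : Prop :=
  match v with
  | Some d => (exists A, good e A /\ #|A| = d) /\ (forall A, good e A -> (d <= #|A|)%N)
  | None => forall A, ~ good e A
  end.

Lemma vnum_cv (K : fieldType) (T : finType) (e : rel T) v :
  simple_graph e -> is_vnum (cover_ideal K e) v -> cv e v.
Proof.
move=> se; case: v => [d|] /=.
  move=> [wd H]; have [A [gA le]] := W_lb se wd.
  have le2 := H _ (W_ub K se gA).
  split; first by exists A; split => //; apply/eqP; rewrite eqn_leq le le2.
  by move=> B gB; exact: H _ (W_ub K se gB).
by move=> H A gA; exact: H _ (W_ub K se gA).
Qed.

Lemma cv_vnum (K : fieldType) (T : finType) (e : rel T) v :
  simple_graph e -> cv e v -> is_vnum (cover_ideal K e) v.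
Proof.
move=> se; case: v => [d|] /=.
  move=> [[A [gA <-]] H]; split; first exact: W_ub.
  by move=> d' wd; have [B [gB le]] := W_lb se wd; exact: leq_trans (H B gB) le.
by move=> H d wd; have [B [gB _]] := W_lb se wd; exact: H B gB.
Qed.

Lemma simple_join (T1 T2 : finType) (e1 : rel T1) (e2 : rel T2) :
  simple_graph e1 -> simple_graph e2 -> simple_graph (graph_join e1 e2).
Proof.
move=> [s1 i1] [s2 i2]; split.
  by move=> [x|x] [y|y] //=; first [exact: s1 | exact: s2].
by move=> [x|x] /=; first [exact: i1 | exact: i2].
Qed.

Lemma cv_join (T1 T2 : finType) (e1 : rel T1) (e2 : rel T2) v1 v2 :
  simple_graph e1 -> simple_graph e2 -> ~ complete_multipartite (graph_join e1 e2) ->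
  cv e1 v1 -> cv e2 v2 ->
  cv (graph_join e1 e2) (ominn (oaddn v1 #|T2|) (oaddn v2 #|T1|)).
Proof.
move=> s1 s2 ncm.
case: v1 => [d1|] /=; case: v2 => [d2|] /=.
- move=> [[A1 [g1 c1]] lb1] [[A2 [g2 c2]] lb2]; split.
    case: (leqP (d1 + #|T2|) (d2 + #|T1|)) => h.
      have [gA cA] := L1 e2 g1; eexists; split; first exact: gA.
      by rewrite cA c1.
    have [gA cA] := L2 e1 g2; eexists; split; first exact: gA.
    by rewrite cA c2.
  move=> A gA; rewrite geq_min; case: (L3 s1 s2 ncm gA) => [[B [gB le]]|[B [gB le]]].
    by apply/orP; left; apply: leq_trans le; rewrite leq_add2r; exact: lb1.
  by apply/orP; right; apply: leq_trans le; rewrite leq_add2r; exact: lb2.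
- move=> [[A1 [g1 c1]] lb1] n2; split.
    by have [gA cA] := L1 e2 g1; eexists; split; first exact: gA; rewrite cA c1.
  move=> A gA; case: (L3 s1 s2 ncm gA) => [[B [gB le]]|[B [gB le]]].
    by apply: leq_trans le; rewrite leq_add2r; exact: lb1.
  by case: (n2 B).
- move=> n1 [[A2 [g2 c2]] lb2]; split.
    by have [gA cA] := L2 e1 g2; eexists; split; first exact: gA; rewrite cA c2.
  move=> A gA; case: (L3 s1 s2 ncm gA) => [[B [gB le]]|[B [gB le]]].
    by case: (n1 B).
  by apply: leq_trans le; rewrite leq_add2r; exact: lb2.
- move=> n1 n2 A gA; case: (L3 s1 s2 ncm gA) => [[B [gB le]]|[B [gB le]]].
    by case: (n1 B).
  by case: (n2 B).
Qed.

Unset Implicit Arguments.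
Theorem proposition3p12 (K : fieldType) (T1 T2 : finType)
    (e1 : rel T1) (e2 : rel T2) :
  simple_graph e1 -> simple_graph e2 ->
  ~ complete_multipartite (graph_join e1 e2) ->
  (forall v1 v2 : option nat,
     is_vnum (cover_ideal K e1) v1 ->
     is_vnum (cover_ideal K e2) v2 ->
     is_vnum (cover_ideal K (graph_join e1 e2))
       (ominn (oaddn v1 #|T2|) (oaddn v2 #|T1|)))
  /\
  (discrete_graph e2 ->
   forall v1 : option nat,
     is_vnum (cover_ideal K e1) v1 ->
     is_vnum (cover_ideal K (graph_join e1 e2)) (oaddn v1 #|T2|)).
Proof.
move=> s1 s2 ncm.
have partA : forall v1 v2 : option nat,
     is_vnum (cover_ideal K e1) v1 ->
     is_vnum (cover_ideal K e2) v2 ->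
     is_vnum (cover_ideal K (graph_join e1 e2))
       (ominn (oaddn v1 #|T2|) (oaddn v2 #|T1|)).
  move=> v1 v2 h1 h2; apply: cv_vnum; first exact: simple_join.
  by apply: cv_join => //; [exact: vnum_cv h1 | exact: vnum_cv h2].
split => // dis v1 h1.
have h2 : is_vnum (cover_ideal K e2) None.
  apply: cv_vnum => // A [x [y [exy _]]]; by rewrite dis in exy.
have := partA _ _ h1 h2; by case: v1 {h1}.
Qed.
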